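(* Let $K\ge 2$, $M,N,d$ be positive integers with $d\le \min(M,N)$, and consider the symmetric system $(M\times N,d)^K$ (i.e. $M^{[k]}=M$, $N^{[k]}=N$, $d^{[k]}=d$ for all $k\in\{1,\dots,K\}$). Then this system is proper if and only if $N_v\ge N_e$, and this holds if and only if $M+N-(K+1)d\ge 0$.
   Context: A $K$-user MIMO interference system $\Pi_{k=1}^K(M^{[k]}\times N^{[k]},d^{[k]})$ is specified by positive integers $M^{[k]}$ (transmit antennas of user $k$), $N^{[k]}$ (receive antennas of user $k$) and $d^{[k]}\le\min(M^{[k]},N^{[k]})$ (number of beams of user $k$), $k\in\mathcal{K}=\{1,\dots,K\}$. Its variables are: for each $j\in\mathcal K$ and $n\in\{1,\dots,d^{[j]}\}$ a set $T_{j,n}$ of $M^{[j]}-d^{[j]}$ variables (the free entries of the $n$-th transmit beam of user $j$, normalized so its top $d^{[j]}\times d^{[j]}$ block of the precoder is the identity), and for each $k\in\mathcal K$ and $m\in\{1,\dots,d^{[k]}\}$ a set $R_{k,m}$ of $N^{[k]}-d^{[k]}$ variables (the free entries of the $m$-th receive beam of user $k$); all these sets are pairwise disjoint. The equations are $E^{kj}_{mn}$ (standing for $\mathbf u^{[k]\dagger}_m \mathbf H^{[kj]}\mathbf v^{[j]}_n=0$) for $j,k\in\mathcal K$, $k\ne j$, $m\in\{1,\dots,d^{[k]}\}$, $n\in\{1,\dots,d^{[j]}\}$; let $\mathcal E$ be the set of all of them and set $\mathrm{var}(E^{kj}_{mn})=T_{j,n}\cup R_{k,m}$, so $|\mathrm{var}(E^{kj}_{mn})|=(M^{[j]}-d^{[j]})+(N^{[k]}-d^{[k]})$.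 The system is called proper if for every subset $S\subseteq\mathcal E$, $|S|\le\left|\bigcup_{E\in S}\mathrm{var}(E)\right|$, and improper otherwise. The total numbers of equations and variables are $N_e=\sum_{k,j\in\mathcal K,\,k\ne j} d^{[k]}d^{[j]}$ and $N_v=\sum_{k=1}^K d^{[k]}(M^{[k]}+N^{[k]}-2d^{[k]})$. *)

(* Defs.v *)
From mathcomp Require Import all_boot.
Set Implicit Arguments. Unset Strict Implicit. Unset Printing Implicit Defensive.

(* A K-user MIMO interference system is given by K and functions
   M N d : 'I_K -> nat (users are indexed 0..K-1 instead of 1..K). *)

Section Sys.
Variables (K : nat) (M N d : 'I_K -> nat).

(* A bound on all indices occurring below. *)
Definition bnd : nat := \sum_(k < K) (M k + N k).

(* Variables: (side, user, beam, entry).  side = false : transmit variable of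
   T_{user,beam} (entry < M user - d user);  side = true : receive variable of
   R_{user,beam} (entry < N user - d user).  *)
Definition var_t : finType := (bool * 'I_K * 'I_bnd * 'I_bnd)%type.

(* Equation labels (k, j, m, n) standing for E^{kj}_{mn}. *)
Definition eqn_t : finType := ('I_K * 'I_K * 'I_bnd * 'I_bnd)%type.

Definition eqns : {set eqn_t} :=
  [set e : eqn_t | let: (k, j, m, n) := e in
     [&& k != j, (m < d k)%N & (n < d j)%N]].

Definition Tvars (j : 'I_K) (n : nat) : {set var_t} :=
  [set v : var_t | let: (s, u, b, t) := v in
     [&& ~~ s, u == j, (b == n :> nat) & (t < M j - d j)%N]].

Definition Rvars (k : 'I_K) (m : nat) : {set var_t} :=
  [set v : var_t | let: (s, u, b, r) := v in
     [&& s, u == k, (b == m :> nat) & (r < N k - d k)%N]].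

Definition varE (e : eqn_t) : {set var_t} :=
  let: (k, j, m, n) := e in Tvars j n :|: Rvars k m.

Definition proper_sys : Prop :=
  forall S : {set eqn_t}, S \subset eqns ->
    #|S| <= #|\bigcup_(e in S) varE e|.

Definition Ne : nat :=
  \sum_(k < K) \sum_(j < K | k != j) d k * d j.

Definition Nv : nat :=
  \sum_(k < K) d k * (M k + N k - 2 * d k).

End Sys.

(* Main.v *)
Require Import Defs.
From mathcomp Require Import all_boot all_algebra zify ring.
Set Implicit Arguments. Unset Strict Implicit. Unset Printing Implicit Defensive.

Section S.
Variables K M N d : nat.
Notation Mf := (fun _ : 'I_K => M).
Notation Nf := (fun _ : 'I_K => N).
Notation df := (fun _ : 'I_K => d).
Notation B := (bnd Mf Nf).
Notation ET := (eqn_t Mf Nf).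
Notation VT := (var_t Mf Nf).

Lemma B_val : B = K * (M + N).
Proof. by rewrite /bnd big_const_ord iter_addn_0 mulnC. Qed.

Definition lt_set n : {set 'I_B} := [set t : 'I_B | t < n].

Lemma card_lt_set n : n <= B -> #|lt_set n| = n.
Proof.
move=> h.
have -> : lt_set n = [set widen_ord h i | i in 'I_n].
  apply/setP => t; rewrite !inE; apply/idP/imsetP.
  - by move=> ht; exists (Ordinal ht) => //; apply: val_inj.
  - by case=> i _ ->; rewrite /= ltn_ord.
rewrite card_imset ?card_ord //.
by move=> i j /(congr1 val) /= /val_inj.
Qed.

Definition fT (e : ET) : 'I_K * 'I_B := (e.1.1.2, e.2).
Definition fR (e : ET) : 'I_K * 'I_B := (e.1.1.1, e.1.2).

Definition gT (x : 'I_K * 'I_B * 'I_B) : VT := (false, x.1.1, x.1.2, x.2).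
Definition gR (x : 'I_K * 'I_B * 'I_B) : VT := (true, x.1.1, x.1.2, x.2).

Definition imT (P : {set 'I_K * 'I_B}) := gT @: setX P (lt_set (M - d)).
Definition imR (P : {set 'I_K * 'I_B}) := gR @: setX P (lt_set (N - d)).

Lemma gT_inj : injective gT.
Proof. by move=> [[j n] t] [[j' n'] t'] [-> -> ->]. Qed.
Lemma gR_inj : injective gR.
Proof. by move=> [[j n] t] [[j' n'] t'] [-> -> ->]. Qed.

Lemma union_eq (S : {set ET}) :
  \bigcup_(e in S) varE df e = imT (fT @: S) :|: imR (fR @: S).
Proof.
apply/setP => v; apply/bigcupP/setUP.
- case=> [[[[k j] m] n]] eS; case: v => [[[s u] bb] t].
  rewrite /varE /Tvars /Rvars !inE => /orP [] /and4P [hs /eqP hu /eqP hb ht].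
  + left; apply/imsetP; exists (u, bb, t).
      rewrite !inE ht andbT; apply/imsetP; exists (k, j, m, n) => //.
      by rewrite /fT /= hu; congr pair; apply: val_inj.
    by rewrite /gT /=; move: hs; case: s.
  + right; apply/imsetP; exists (u, bb, t).
      rewrite !inE ht andbT; apply/imsetP; exists (k, j, m, n) => //.
      by rewrite /fR /= hu; congr pair; apply: val_inj.
    by rewrite /gR /=; move: hs; case: s.
- case.
  + case/imsetP=> [[[u bb] t]]; rewrite !inE /= => /andP [/imsetP [e eS he] ht] ->.
    exists e => //; case: e eS he => [[[k j] m] n] eS [-> ->].
    by rewrite /varE /gT !inE /= !eqxx ht.
  + case/imsetP=> [[[u bb] t]]; rewrite !inE /= => /andP [/imsetP [e eS he] ht] ->.
    exists e => //; case: e eS he => [[[k j] m] n] eS [-> ->].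
    by rewrite /varE /gR !inE /= !eqxx ht.
Qed.

Lemma card_union (S : {set ET}) : M - d <= B -> N - d <= B ->
  #|\bigcup_(e in S) varE df e| = #|fT @: S| * (M - d) + #|fR @: S| * (N - d).
Proof.
move=> ha hb; rewrite union_eq cardsU.
have -> : imT (fT @: S) :&: imR (fR @: S) = set0.
  apply/setP => v; rewrite !inE; apply/negbTE/negP => /andP [].
  by case/imsetP=> x _ -> /imsetP [y _].
by rewrite cards0 subn0 /imT /imR (card_imset _ (@gT_inj)) (card_imset _ (@gR_inj)) !cardsX !card_lt_set.
Qed.

Lemma fiberT (S : {set ET}) : d <= B -> S \subset eqns Mf Nf df ->
  #|S| <= #|fT @: S| * ((K-1) * d).
Proof.
move=> hdB sub.
rewrite -sum1_card (partition_big_imset fT) /= -sum_nat_const.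
apply: leq_sum => x _.
rewrite sum1dep_card.
set F := [set i | _].
have inj : {in F &, injective fR}.
  move=> [[[k j] m] n] [[[k' j'] m'] n']; rewrite !inE /fT /fR /=.
  by move=> /andP [_ /eqP <-] /andP [_ /eqP [-> ->]] [-> ->].
rewrite -(card_in_imset inj).
apply: leq_trans (subset_leq_card (_ : fR @: F \subset setX [set~ x.1] (lt_set d))) _.
  apply/subsetP => y /imsetP [[[[k j] m] n]]; rewrite !inE => /andP [eS /eqP hx] ->.
  have := subsetP sub _ eS; rewrite /eqns inE => /and3P [kj md nd].
  by rewrite /fR -hx /= kj md.
by rewrite cardsX cardsC1 card_ord card_lt_set // subn1.
Qed.

Lemma fiberR (S : {set ET}) : d <= B -> S \subset eqns Mf Nf df ->
  #|S| <= #|fR @: S| * ((K-1) * d).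
Proof.
move=> hdB sub.
rewrite -sum1_card (partition_big_imset fR) /= -sum_nat_const.
apply: leq_sum => x _.
rewrite sum1dep_card.
set F := [set i | _].
have inj : {in F &, injective fT}.
  move=> [[[k j] m] n] [[[k' j'] m'] n']; rewrite !inE /fT /fR /=.
  by move=> /andP [_ /eqP <-] /andP [_ /eqP [-> ->]] [-> ->].
rewrite -(card_in_imset inj).
apply: leq_trans (subset_leq_card (_ : fT @: F \subset setX [set~ x.1] (lt_set d))) _.
  apply/subsetP => y /imsetP [[[[k j] m] n]]; rewrite !inE => /andP [eS /eqP hx] ->.
  have := subsetP sub _ eS; rewrite /eqns inE => /and3P [kj md nd].
  by rewrite /fT -hx /= eq_sym kj nd.
by rewrite cardsX cardsC1 card_ord card_lt_set // subn1.
Qed.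

Lemma card_eqns : d <= B -> #|eqns Mf Nf df| = (K * K - K) * d * d.
Proof.
move=> hdB.
pose D := [set p : 'I_K * 'I_K | p.1 != p.2].
have -> : eqns Mf Nf df = setX (setX D (lt_set d)) (lt_set d).
  by apply/setP => [[[[k j] m] n]]; rewrite !inE /= andbA.
rewrite !cardsX card_lt_set //.
have hD : #|~: D| = K.
  have -> : ~: D = [set (i, i) | i in 'I_K].
    apply/setP => [[i j]]; rewrite !inE negbK; apply/eqP/imsetP.
      by move=> /= ->; exists j.
    by case=> x _ [-> ->].
  by rewrite card_imset ?card_ord // => x y [].
have := cardsC D; rewrite hD card_prod card_ord => <-.
by rewrite addnK.
Qed.

Lemma imT_bound (S : {set ET}) : d <= B -> S \subset eqns Mf Nf df ->
  #|fT @: S| <= K * d.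
Proof.
move=> hdB sub.
apply: leq_trans (subset_leq_card (_ : _ \subset setX [set: 'I_K] (lt_set d))) _; last first.
  by rewrite cardsX cardsT card_ord card_lt_set.
apply/subsetP => x /imsetP [[[[k j] m] n] eS ->].
have := subsetP sub _ eS; rewrite /eqns inE => /and3P [kj md nd].
by rewrite !inE /= nd.
Qed.

Lemma imR_bound (S : {set ET}) : d <= B -> S \subset eqns Mf Nf df ->
  #|fR @: S| <= K * d.
Proof.
move=> hdB sub.
apply: leq_trans (subset_leq_card (_ : _ \subset setX [set: 'I_K] (lt_set d))) _; last first.
  by rewrite cardsX cardsT card_ord card_lt_set.
apply/subsetP => x /imsetP [[[[k j] m] n] eS ->].
have := subsetP sub _ eS; rewrite /eqns inE => /and3P [kj md nd].
by rewrite !inE /= md.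
Qed.

Lemma Ne_val : Ne df = K * ((K - 1) * (d * d)).
Proof.
have inner k : \sum_(j < K | k != j) d * d = (K - 1) * (d * d).
  rewrite (eq_bigl (mem [set~ k])) ?sum_nat_const ?cardsC1 ?card_ord ?subn1 //.
  by move=> j; rewrite /= !inE eq_sym.
by rewrite /Ne (eq_bigr _ (fun k _ => inner k)) big_const_ord iter_addn_0 mulnC.
Qed.

Lemma Nv_val : Nv Mf Nf df = K * (d * (M + N - 2 * d)).
Proof. by rewrite /Nv big_const_ord iter_addn_0 mulnC. Qed.
End S.

Lemma arith s p q a b c : s <= p * c -> s <= q * c -> c <= a + b -> s <= p * a + q * b.
Proof.
move=> h1 h2 h3.
case: (posnP (a + b)) => hab.
  by move: h3; rewrite hab leqn0 => /eqP h0; move: h1; rewrite h0 muln0 leqn0 => /eqP ->.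
rewrite -(leq_pmul2l hab).
apply: (@leq_trans (a * (p * c) + b * (q * c))).
  by rewrite mulnDl leq_add // leq_mul.
have e : (a + b) * (p * a + q * b) = a * (p * (a + b)) + b * (q * (a + b)) by ring.
by rewrite e leq_add // leq_mul // leq_mul.
Qed.

Theorem theorem1 (K M N d : nat) :
  (2 <= K)%N -> (0 < M)%N -> (0 < N)%N -> (0 < d)%N -> (d <= minn M N)%N ->
  (proper_sys (fun _ : 'I_K => M) (fun _ => N) (fun _ => d) <->
     (Ne (fun _ : 'I_K => d) <= Nv (fun _ : 'I_K => M) (fun _ => N) (fun _ => d))%N)
  /\
  ((Ne (fun _ : 'I_K => d) <= Nv (fun _ : 'I_K => M) (fun _ => N) (fun _ => d))%N <->
     ((K + 1) * d <= M + N)%N).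
Proof.
move=> hK hM hN hd; rewrite leq_min => /andP [hdM hdN].
have hK0 : 0 < K by lia.
have hB : M + N <= bnd (fun _ : 'I_K => M) (fun _ => N).
  by rewrite B_val leq_pmull.
have hdB : d <= bnd (fun _ : 'I_K => M) (fun _ => N) by lia.
have haB : M - d <= bnd (fun _ : 'I_K => M) (fun _ => N) by lia.
have hbB : N - d <= bnd (fun _ : 'I_K => M) (fun _ => N) by lia.
have key : (Ne (fun _ : 'I_K => d) <= Nv (fun _ : 'I_K => M) (fun _ => N) (fun _ => d))
    = ((K - 1) * d <= M + N - 2 * d).
  by rewrite Ne_val Nv_val leq_pmul2l // mulnCA leq_pmul2l.
have key2 : ((K - 1) * d <= M + N - 2 * d) = ((K + 1) * d <= M + N).
  rewrite mulnBl mulnDl mul1n; apply/idP/idP; lia.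
split; last by rewrite key key2.
split.
- move=> pr.
  have := pr _ (subxx _).
  rewrite card_union // card_eqns //.
  have h1 := imT_bound hdB (subxx (eqns _ _ (fun _ : 'I_K => d))).
  have h2 := imR_bound hdB (subxx (eqns _ _ (fun _ : 'I_K => d))).
  move=> h.
  rewrite Ne_val Nv_val.
  have e1 : K * ((K - 1) * (d * d)) = (K * K - K) * d * d.
    by rewrite !mulnA mulnBr muln1.
  rewrite e1; apply: (leq_trans h).
  have e2 : M + N - 2 * d = (M - d) + (N - d) by lia.
  rewrite e2 mulnA mulnDr.
  by apply: leq_add; apply: leq_mul.
- rewrite key => hc S sub.
  rewrite card_union //.
  apply: (arith (fiberT hdB sub) (fiberR hdB sub)).
  lia.
Qed.
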